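(* Assume $k=3$. (1) If $r=e-3$, then $b=(l_1+l_2+2)(e-2)+h-2(p+1)$. Moreover, if $p<l_1+l_2+2$ then $b\ge(l_1+l_2+2)(e-4)+h$ with $h\ge0$; if $p=l_1+l_2+2$ then $b=(l_1+l_2+2)(e-4)+h-2$ with $h>0$. (2) If $r=e-2$, then $b=(l_1+l_2+2)(e-1)+h-p-1$ and $p\le2l_1+2$; further, $p=2l_1+2$ implies $h>0$. (3) If $r=e-1$, then $b=(l_1+l_2+2)e+h$.
   Context: Let $(R,\mathfrak m)$ be a one-dimensional local Noetherian domain with quotient field $K$, not regular, analytically irreducible (the integral closure $\overline R$ of $R$ in $K$ is a DVR and a finite $R$-module) and residually rational. Let $v$ be the valuation of $\overline R$ normalized so a uniformizer $t$ has value 1, $v(R)=\{v(a):a\in R\setminus\{0\}\}$, $\mathfrak C=(R:_K\overline R)=t^c\overline R$ with $c$ the least element of $v(R)$ with $c+\mathbb N\subseteq v(R)$, $\delta=\ell_R(\overline R/R)$, $r=\ell_R((R:_K\mathfrak m)/R)$, $b=(c-\delta)r-\delta$, $e$ the least positive element of $v(R)$. Let $x\in\mathfrak m$ with $v(x)=e$ and $k=\ell_R(R/(\mathfrak C+xR))$. Let $p$ be the integer with $c-e\le pe<c$ and $h=(p+1)e-c$. When $k=3$, $y_1<y_2$ are the elements $y\in v(R)$ with $0<y<c$ and $y-e\notin v(R)$, and $l_i\ge0$ is the integer with $y_i+l_ie<c\le y_i+(l_i+1)e$. *)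

(* Defs.v *)
From HB Require Import structures.
From mathcomp Require Import all_boot all_order all_algebra.
Set Implicit Arguments. Unset Strict Implicit. Unset Printing Implicit Defensive.
Import Order.TTheory GRing.Theory Num.Theory.
Local Open Scope ring_scope.

Section Defs.
Variable K : fieldType.

Definition is_subring (R : K -> Prop) : Prop :=
  [/\ R 0, R 1, (forall a b, R a -> R b -> R (a - b))
    & (forall a b, R a -> R b -> R (a * b))].

Definition is_quotient_field (R : K -> Prop) : Prop :=
  forall z, exists a b, [/\ R a, R b, b != 0 & z = a / b].

(* v is a discrete valuation of K normalized so that a uniformizer has value 1;
   the value of 0 is irrelevant (never used). *)
Definition is_normalized_discrete_valuation (v : K -> int) : Prop :=
  [/\ (forall x y, x != 0 -> y != 0 -> v (x * y) = v x + v y),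
      (forall x y, x != 0 -> y != 0 -> x + y != 0 ->
                   Num.min (v x) (v y) <= v (x + y))
    & (exists t, t != 0 /\ v t = 1)].

Definition val_ring (v : K -> int) (z : K) : Prop := z = 0 \/ 0 <= v z.

Definition integral_over (R : K -> Prop) (z : K) : Prop :=
  exists P : {poly K}, [/\ P \is monic, (forall i, R P`_i) & root P z].

Definition integral_closure_is (R : K -> Prop) (V : K -> Prop) : Prop :=
  forall z, integral_over R z <-> V z.

Definition finite_Rmodule (R M : K -> Prop) : Prop :=
  exists (n : nat) (g : 'I_n -> K),
    forall z, M z <-> exists a : 'I_n -> K, (forall i, R (a i)) /\ z = \sum_(i < n) a i * g i.

Definition Runit (R : K -> Prop) (a : K) : Prop := exists b, R b /\ a * b = 1.
Definition max_ideal (R : K -> Prop) (a : K) : Prop := R a /\ ~ Runit R a.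

Definition is_local (R : K -> Prop) : Prop :=
  (forall a b, max_ideal R a -> max_ideal R b -> max_ideal R (a + b)) /\
  (forall a b, R a -> max_ideal R b -> max_ideal R (a * b)).

Definition regular_dim1 (R : K -> Prop) : Prop :=
  exists t, max_ideal R t /\
    forall a, max_ideal R a <-> exists b, R b /\ a = t * b.

(* residually rational: R/m -> Rbar/m_Rbar is onto (the residue fields agree) *)
Definition residually_rational (R : K -> Prop) (v : K -> int) : Prop :=
  forall u, val_ring v u -> exists a, R a /\ (u - a = 0 \/ 0 < v (u - a)).

Definition is_submodule (R M : K -> Prop) : Prop :=
  [/\ M 0, (forall a b, M a -> M b -> M (a + b))
    & (forall r a, R r -> M a -> M (r * a))].

Definition subsetK (M N : K -> Prop) : Prop := forall z, M z -> N z.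
Definition ssubsetK (M N : K -> Prop) : Prop := subsetK M N /\ ~ subsetK N M.
Definition eqK (M N : K -> Prop) : Prop := forall z, M z <-> N z.

(* length_R(M/N) = n : there is a composition series
   N = M_0 < M_1 < ... < M_n = M of R-submodules of K
   (by Jordan--Hoelder, n is then the length). *)
Definition length_is (R M N : K -> Prop) (n : nat) : Prop :=
  exists ch : nat -> (K -> Prop),
    [/\ eqK (ch 0%N) N, eqK (ch n) M,
        (forall i, (i <= n)%N -> is_submodule R (ch i)),
        (forall i, (i < n)%N -> ssubsetK (ch i) (ch i.+1))
      & (forall i L, (i < n)%N -> is_submodule R L ->
           subsetK (ch i) L -> subsetK L (ch i.+1) ->
           eqK L (ch i) \/ eqK L (ch i.+1))].

Definition colon (R I : K -> Prop) (z : K) : Prop := forall a, I a -> R (z * a).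

Definition sum_C_xR (R C : K -> Prop) (x : K) (z : K) : Prop :=
  exists a b, [/\ C a, R b & z = a + x * b].

Definition in_valR (R : K -> Prop) (v : K -> int) (n : int) : Prop :=
  exists a, [/\ R a, a != 0 & v a = n].

End Defs.

(* Main.v *)
Require Import Defs.
From Stdlib Require Import ClassicalEpsilon.
From HB Require Import structures.
From mathcomp Require Import all_boot all_order all_algebra.
From mathcomp Require Import zify ring lra.
Set Implicit Arguments. Unset Strict Implicit. Unset Printing Implicit Defensive.
Lemma count_split (T : Type) (a b : pred T) (s : seq T) : (forall x, a x -> b x) ->
  count b s = (count a s + count (fun x => b x && ~~ a x) s)%N.
Proof.
move=> h; elim: s => [|x s IH] //=; rewrite IH.
case ha: (a x); first by rewrite (h _ ha).
by case: (b x) => /=; rewrite ?addn0 ?add0n ?addnS ?addSn.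
Qed.

Lemma count_or_disj (T : Type) (a b : pred T) (s : seq T) : (forall x, ~~ (a x && b x)) ->
  count (fun x => a x || b x) s = count a s + count b s.
Proof.
move=> h; elim: s => [|x s IH] //=; rewrite IH.
have := h x; case: (a x); case: (b x) => //= _; lia.
Qed.

Lemma count_or1 (a : pred nat) x s : uniq s -> x \in s -> ~~ a x ->
  count (fun y => a y || (y == x)) s = count a s + 1.
Proof.
move=> us xs nax.
rewrite count_or_disj; last by move=> y; apply/negP => /andP [ay /eqP e]; move: nax; rewrite -e ay.
congr (_ + _); rewrite -[1]/(nat_of_bool true) -xs -(count_uniq_mem x us).
by apply: eq_count => y; rewrite eq_sym.
Qed.

Lemma count_ge n m : count (fun s => m <= s) (iota 0 n) = n - m.
Proof.
elim: n => [|n IH] //.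
rewrite -addn1 iotaD count_cat IH /= add0n addn0; case: (leqP m n) => h; lia.
Qed.

Section Comb.
Variable S : pred nat.
Variables E Cn P Y1 Y2 L1 L2 : nat.
Hypothesis S0 : S 0.
Hypothesis SE : S E.
Hypothesis Sadd : forall a b, S a -> S b -> S (a + b).
Hypothesis Epos : 0 < E.
Hypothesis SY1 : S Y1.
Hypothesis SY2 : S Y2.
Hypothesis Y1pos : 0 < Y1.
Hypothesis Y12 : Y1 < Y2.
Hypothesis Y2c : Y2 < Cn.
Hypothesis nY1 : ~~ ((E <= Y1) && S (Y1 - E)).
Hypothesis nY2 : ~~ ((E <= Y2) && S (Y2 - E)).
Hypothesis hy : forall s, S s -> 0 < s -> s < Cn -> ~~ ((E <= s) && S (s - E)) -> (s == Y1) || (s == Y2).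
Hypothesis hP1 : P * E < Cn.
Hypothesis hP2 : Cn <= P * E + E.
Hypothesis hL1a : Y1 + L1 * E < Cn.
Hypothesis hL1b : Cn <= Y1 + L1 * E + E.
Hypothesis hL2a : Y2 + L2 * E < Cn.
Hypothesis hL2b : Cn <= Y2 + L2 * E + E.

Definition chain u l s := has (fun j => s == u + j * E) (iota 0 l.+1).

Lemma chainP u l s : reflect (exists j, j <= l /\ s = u + j * E) (chain u l s).
Proof.
apply: (iffP hasP) => [[j]|[j [jl ->]]].
  by rewrite mem_iota add0n => /andP [_ jl] /eqP ->; exists j; split => //; lia.
by exists j; rewrite ?mem_iota ?eqxx //; apply/andP; split => //; lia.
Qed.

Definition full s := chain 0 P s || chain Y1 L1 s || chain Y2 L2 s.

Lemma SjE j : S (j * E).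
Proof. by elim: j => [|j IH]; rewrite ?mul0n // mulSn; apply: Sadd. Qed.

Lemma chain_S u l s : S u -> chain u l s -> S s.
Proof. by move=> Su /chainP [j [_ ->]]; apply: Sadd => //; apply: SjE. Qed.

Lemma full_S s : full s -> S s.
Proof. by case/orP => [/orP [] |]; apply: chain_S. Qed.

Lemma S_full s : s < Cn -> S s -> full s.
Proof.
elim/ltn_ind: s => s IH sc Ss.
case: (posnP s) => [->|spos].
  by rewrite /full; apply/orP; left; apply/orP; left; apply/chainP; exists 0; split.
case: (boolP ((E <= s) && S (s - E))) => [/andP [Es Sse]|hn].
  have hlt : s - E < s by lia.
  have hc : s - E < Cn by lia.
  have := IH _ hlt hc Sse.
  rewrite /full => /orP [/orP [] |] /chainP [j [jl ej]].
  - apply/orP; left; apply/orP; left; apply/chainP; exists j.+1; split; nia.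
  - apply/orP; left; apply/orP; right; apply/chainP; exists j.+1; split; nia.
  - apply/orP; right; apply/chainP; exists j.+1; split; nia.
have := hy Ss spos sc hn; case/orP => /eqP ->.
  by apply/orP; left; apply/orP; right; apply/chainP; exists 0; split => //; lia.
by apply/orP; right; apply/chainP; exists 0; split => //; lia.
Qed.

Lemma SnotY1 j : ~ (Y1 = j * E).
Proof.
move=> e; move: nY1; case: j e => [|j] e; first by move: Y1pos; rewrite e.
have -> : Y1 - E = j * E by rewrite e mulSn; lia.
by rewrite SjE andbT e mulSn; lia.
Qed.

Lemma SnotY2 j : ~ (Y2 = j * E).
Proof.
move=> e; move: nY2; case: j e => [|j] e; first by move: Y1pos Y12; rewrite e; lia.
have -> : Y2 - E = j * E by rewrite e mulSn; lia.
by rewrite SjE andbT e mulSn; lia.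
Qed.

Lemma disj01 s : ~~ (chain 0 P s && chain Y1 L1 s).
Proof.
apply/negP => /andP [/chainP [i [_ ->]] /chainP [j [_ e]]].
have ij : j < i by move: Y1pos e; nia.
have e' : Y1 = (i - j) * E by move: e; rewrite mulnBl; lia.
exact: SnotY1 e'.
Qed.

Lemma disj02 s : ~~ (chain 0 P s && chain Y2 L2 s).
Proof.
apply/negP => /andP [/chainP [i [_ ->]] /chainP [j [_ e]]].
have ij : j < i by move: Y1pos Y12 e; nia.
have e' : Y2 = (i - j) * E by move: e; rewrite mulnBl; lia.
exact: SnotY2 e'.
Qed.

Lemma disj12 s : ~~ (chain Y1 L1 s && chain Y2 L2 s).
Proof.
apply/negP => /andP [/chainP [i [_ ->]] /chainP [j [_ e]]].
have ij : j < i by move: Y12 e; nia.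
move: nY2; have -> : Y2 - E = Y1 + (i - j).-1 * E.
  have : Y2 = Y1 + (i - j) * E by rewrite mulnBl; lia.
  case: (i - j) => [|k]; [lia | rewrite mulSn /=; lia].
rewrite (chain_S SY1 (l := (i - j).-1)); last by apply/chainP; exists (i - j).-1.
rewrite andbT; move: e; nia.
Qed.

Lemma count_chain u l n : u + l * E < n -> count (chain u l) (iota 0 n) = l.+1.
Proof.
elim: l => [|l IH] h.
  rewrite (eq_count (a2 := pred1 u)); last by move=> s; rewrite /chain /= orbF mul0n addn0.
  by rewrite count_uniq_mem ?iota_uniq // mem_iota; lia.
rewrite (count_split (b := chain u l.+1) (a := chain u l)); last first.
  by move=> s /chainP [j [jl ->]]; apply/chainP; exists j; split => //; lia.
rewrite IH; last by lia.
rewrite (eq_count (a2 := pred1 (u + l.+1 * E))).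
  by rewrite count_uniq_mem ?iota_uniq // mem_iota; lia.
move=> s /=; apply/idP/idP.
  move=> /andP [/chainP [j [jl ->]] hn]; apply/eqP; congr (_ + _ * _).
  apply/eqP; rewrite eqn_leq jl /= leqNgt; apply/negP => hjl.
  by move/negP: hn; apply; apply/chainP; exists j; split => //; lia.
move=> /eqP ->; apply/andP; split; first by apply/chainP; exists l.+1.
apply/negP => /chainP [j [jl e]]; move: e; nia.
Qed.

Lemma count_S : count S (iota 0 Cn) = P.+1 + L1.+1 + L2.+1.
Proof.
rewrite (eq_in_count (a2 := full)); last first.
  move=> s; rewrite mem_iota add0n => /andP [_ sc].
  by apply/idP/idP; [apply: S_full | apply: full_S].
rewrite /full count_or_disj; last first.
  move=> s; apply/negP => /andP [/orP [h|h] h2].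
    by move/negP: (disj02 s); apply; rewrite h h2.
  by move/negP: (disj12 s); apply; rewrite h h2.
rewrite count_or_disj; last by move=> s; apply: disj01.
rewrite !count_chain //; lia.
Qed.

Lemma count_top : count (fun s => S s && (Cn - E <= s)) (iota 0 Cn) = 3.
Proof.
rewrite (eq_in_count (a2 := fun s => (s == P * E) || (s == Y1 + L1 * E) || (s == Y2 + L2 * E))); last first.
  move=> s; rewrite mem_iota add0n => /andP [_ sc].
  apply/idP/idP.
    move=> /andP [/(S_full sc) hf hs].
    move: hf; rewrite /full => /orP [/orP [] |] /chainP [j [jl ej]].
    - by apply/orP; left; apply/orP; left; apply/eqP; rewrite ej; congr (_ * _); nia.
    - by apply/orP; left; apply/orP; right; apply/eqP; rewrite ej; congr (_ + _ * _); nia.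
    - by apply/orP; right; apply/eqP; rewrite ej; congr (_ + _ * _); nia.
  case/orP => [/orP [] |] /eqP ->; (apply/andP; split; last by lia).
  - exact: SjE.
  - by apply: Sadd => //; apply: SjE.
  - by apply: Sadd => //; apply: SjE.
have c0 : chain 0 P (P * E) by apply/chainP; exists P.
have c1 : chain Y1 L1 (Y1 + L1 * E) by apply/chainP; exists L1.
have c2 : chain Y2 L2 (Y2 + L2 * E) by apply/chainP; exists L2.
rewrite count_or1 ?iota_uniq ?mem_iota //; last first.
  apply/negP => /orP [] /eqP e.
    by move/negP: (disj02 (Y2 + L2 * E)); apply; rewrite c2 e c0.
  by move/negP: (disj12 (Y2 + L2 * E)); apply; rewrite c2 e c1.
rewrite count_or1 ?iota_uniq ?mem_iota //; last first.
  apply/negP => /eqP e.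
  by move/negP: (disj01 (Y1 + L1 * E)); apply; rewrite c1 e c0.
rewrite count_uniq_mem ?iota_uniq // mem_iota; (try lia); rewrite ?add0n; match goal with |- ?g => idtac g end.
Qed.

Hypothesis EC : E <= Cn.
Lemma count_Sge : count (fun s => S s || (Cn - E <= s)) (iota 0 Cn) = (P.+1 + L1.+1 + L2.+1 + E - 3)%N.
Proof.
have := count_predUI S (fun s => Cn - E <= s) (iota 0 Cn).
rewrite count_S count_ge.
have -> : count (predI S (fun s => Cn - E <= s)) (iota 0 Cn) = 3 by rewrite -count_top.
move=> h; rewrite -[LHS]/(count (predU S (fun s => Cn - E <= s)) (iota 0 Cn)); lia.
Qed.
End Comb.


Import Order.TTheory GRing.Theory Num.Theory.
Local Open Scope ring_scope.

Definition pb (P : Prop) : bool := if excluded_middle_informative P then true else false.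
Lemma pbP (P : Prop) : reflect P (pb P).
Proof. by rewrite /pb; case: excluded_middle_informative => h; constructor. Qed.
Lemma pb_iff (P Q : Prop) : (P <-> Q) -> pb P = pb Q.
Proof. by move=> h; case: pbP => hp; case: pbP => hq //; exfalso; tauto. Qed.



Lemma count_two (a : pred nat) (s : seq nat) : uniq s -> (1 < count a s)%N ->
  exists x y, [/\ (x < y)%N, a x, a y, x \in s & y \in s].
Proof.
move=> us; rewrite -size_filter.
have uf : uniq (filter a s) by rewrite filter_uniq.
have mf : forall z, z \in filter a s -> a z /\ z \in s by move=> z; rewrite mem_filter => /andP.
case E: (filter a s) uf mf => [|x [|y t]] //= /andP [nx _] mf _.
have [hx1 hx2] := mf x (mem_head _ _).
have [hy1 hy2] : a y /\ y \in s by apply: mf; rewrite !inE eqxx orbT.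
have xy : x != y by apply/negP => /eqP e; move: nx; rewrite e mem_head.
case: (ltngtP x y) => h.
- by exists x, y.
- by exists y, x.
- by rewrite h eqxx in xy.
Qed.

Section V.
Variable K : fieldType.
Variable v : K -> int.
Hypothesis hv : is_normalized_discrete_valuation v.

Lemma vM x y : x != 0 -> y != 0 -> v (x * y) = v x + v y.
Proof. by case: hv => H _ _; apply: H. Qed.

Lemma v1 : v 1 = 0.
Proof. have := vM (oner_neq0 K) (oner_neq0 K). rewrite mulr1 => h. by apply: (addrI (v 1)); rewrite addr0 -h. Qed.

Lemma vN1 : v (-1) = 0.
Proof.
have h : (-1 : K) != 0 by rewrite oppr_eq0 oner_neq0.
have := vM h h. rewrite mulrNN mulr1 v1. lia. Qed.

Lemma vN z : z != 0 -> v (- z) = v z.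
Proof.
move=> hz. have h : (-1 : K) != 0 by rewrite oppr_eq0 oner_neq0.
by rewrite -mulN1r vM // vN1 add0r.
Qed.

Lemma vV z : z != 0 -> v (z^-1) = - v z.
Proof.
move=> hz. have hz' : z^-1 != 0 by rewrite invr_eq0.
have := vM hz hz'. rewrite mulfV // v1. lia.
Qed.

Lemma vD x y : x != 0 -> y != 0 -> x + y != 0 -> Num.min (v x) (v y) <= v (x + y).
Proof. by case: hv => _ H _; apply: H. Qed.

Lemma vD_ge x y b : x != 0 -> y != 0 -> x + y != 0 -> b <= v x -> b <= v y -> b <= v (x + y).
Proof.
move=> hx hy hxy h1 h2. apply: le_trans (vD hx hy hxy). by rewrite le_min h1 h2.
Qed.

Lemma vD_lt x y : x != 0 -> y != 0 -> v x < v y -> v (x + y) = v x /\ x + y != 0.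
Proof.
move=> hx hy hlt.
have hxy : x + y != 0.
  apply/negP => /eqP e. have : x = - y by rewrite -(addrK y x) e sub0r.
  move=> ex; move: hlt; rewrite ex vN //; lia.
split=> //.
have h1 := vD hx hy hxy.
have hmy : - y != 0 by rewrite oppr_eq0.
have h2 := vD hxy hmy. rewrite addrK in h2. have := h2 hx. rewrite vN //.
move: h1. rewrite /Num.min. case: ifP; case: ifP; lia.
Qed.
End V.

Section Ring.
Variable K : fieldType.
Variable R : K -> Prop.
Variable v : K -> int.
Hypothesis hR : is_subring R.
Hypothesis hv : is_normalized_discrete_valuation v.
Hypothesis hRbar : integral_closure_is R (val_ring v).
Hypothesis hrr : residually_rational R v.

Lemma R0 : R 0. Proof. by case: hR. Qed.
Lemma R1 : R 1. Proof. by case: hR. Qed.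
Lemma RB a b : R a -> R b -> R (a - b). Proof. by case: hR => _ _ H _; apply: H. Qed.
Lemma RM a b : R a -> R b -> R (a * b). Proof. by case: hR => _ _ _ H; apply: H. Qed.
Lemma RN a : R a -> R (- a). Proof. by move=> h; rewrite -sub0r; apply: RB => //; apply: R0. Qed.
Lemma RD a b : R a -> R b -> R (a + b).
Proof. by move=> ha hb; rewrite -[b]opprK; apply: RB => //; apply: RN. Qed.

Lemma R_val a : R a -> a != 0 -> 0 <= v a.
Proof.
move=> ha an0.
have : val_ring v a.
  apply/hRbar; exists ('X - a%:P); split.
  - exact: monicXsubC.
  - move=> i; rewrite coefB coefX coefC.
    case: (i == 1)%N; case: (i == 0)%N => /=;
      rewrite ?subr0 ?sub0r; by [apply: R1 | apply: RN | apply: R0 | rewrite -[_ - _]addr0; apply: RD; [apply: RB; [apply: R1|]|apply: R0]].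
  - by rewrite root_XsubC.
by case=> [/eqP|]; [rewrite (negbTE an0)|].
Qed.

Definition in_valM (M : K -> Prop) (n : int) := exists a, [/\ M a, a != 0 & v a = n].

Lemma descent (N M : K -> Prop) (B : int) :
  (forall a b, M a -> M b -> M (a + b)) -> (forall r a, R r -> M a -> M (r * a)) ->
  N 0 -> (forall a b, N a -> N b -> N (a + b)) -> (forall r a, R r -> N a -> N (r * a)) ->
  (forall z, z != 0 -> B <= v z -> N z) ->
  (forall z, M z -> z != 0 -> v z < B -> exists n, [/\ N n, M n, n != 0 & v n = v z]) ->
  forall w, M w -> N w.
Proof.
move=> MD MM N0 ND NM hi hvv w Mw.
suff H : forall k : nat, forall w, M w -> w != 0 -> (`|B - v w| <= k)%N -> N w.
  case: (eqVneq w 0) => [->|wn0] //. exact: (H _ w Mw wn0 (leqnn _)).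
elim=> [|k IH] {w Mw} w Mw wn0 hk.
  have hh : B <= v w by lia. 
  exact: (hi w wn0 hh).
have [hB|hB] := lerP B (v w); first exact: hi.
have [n [Nn Mn nn0 vn]] := hvv w Mw wn0 hB.
pose u := w / n.
have un0 : u != 0 by rewrite mulf_neq0 // invr_eq0.
have vu : v u = 0 by rewrite /u vM // ?invr_eq0 // vV // vn; lia.
have hu : val_ring v u by right; rewrite vu.
have [a [Ra hor]] := hrr hu.
have [ea|uan0] := eqVneq (u - a) 0.
  have au : a = u by apply/esym/eqP; rewrite -subr_eq0 ea.
  have -> : w = a * n by rewrite au /u divfK.
  exact: NM.
have pa : 0 < v (u - a) by case: hor => // h; rewrite h eqxx in uan0.
pose w' := w + (- a) * n.
have ew' : w' = n * (u - a) by rewrite /w' /u; field.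
have w'n0 : w' != 0 by rewrite ew' mulf_neq0.
have vw' : v w' = v n + v (u - a) by rewrite ew' vM.
have Mw' : M w' by apply: MD => //; apply: MM => //; apply: RN.
have Nw' : N w'.
  have [hB'|hB'] := lerP B (v w'); first exact: hi.
  apply: IH => //. lia.
have -> : w = w' + a * n by rewrite /w'; ring.
by apply: ND => //; apply: NM.
Qed.

Lemma highD (B : int) a b : (a = 0 \/ B <= v a) -> (b = 0 \/ B <= v b) -> (a + b = 0 \/ B <= v (a + b)).
Proof.
case=> [->|ha]; first by rewrite add0r.
case=> [->|hb]; first by rewrite addr0; right.
case: (eqVneq a 0) => [->|an0]; first by rewrite add0r; right.
case: (eqVneq b 0) => [->|bn0]; first by rewrite addr0; right.
case: (eqVneq (a + b) 0) => [->|abn0]; first by left.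
by right; apply: vD_ge.
Qed.

Lemma highM (B : int) r a : R r -> (a = 0 \/ B <= v a) -> (r * a = 0 \/ B <= v (r * a)).
Proof.
move=> Rr; case=> [->|ha]; first by rewrite mulr0; left.
case: (eqVneq r 0) => [->|rn0]; first by rewrite mul0r; left.
case: (eqVneq a 0) => [->|an0]; first by rewrite mulr0; left.
right; rewrite vM //; have := R_val Rr rn0; lia.
Qed.

Hypothesis hK : is_quotient_field R.
Hypothesis hfin : finite_Rmodule R (val_ring v).

Lemma Rsum (I : Type) (s : seq I) (P : pred I) (F : I -> K) :
  (forall i, R (F i)) -> R (\sum_(i <- s | P i) F i).
Proof. move=> h; apply: (big_ind R) => //; [exact: R0 | exact: RD]. Qed.

Lemma Rprod (I : Type) (s : seq I) (P : pred I) (F : I -> K) :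
  (forall i, R (F i)) -> R (\prod_(i <- s | P i) F i).
Proof. move=> h; apply: (big_ind R) => //; [exact: R1 | exact: RM]. Qed.

Lemma conductor_d : exists d, [/\ R d, d != 0 & forall z, val_ring v z -> R (d * z)].
Proof.
case: hfin => n [g Hg].
have hq : forall i, exists ab : K * K, [/\ R ab.1, R ab.2, ab.2 != 0 & g i = ab.1 / ab.2].
  by move=> i; have [a [b [? ? ? ?]]] := hK (g i); exists (a, b).
have [f hf] := fin_all_exists hq.
pose d := \prod_i (f i).2.
exists d; split.
- by apply: Rprod => i; case: (hf i).
- by apply: (big_ind (fun x => x != 0)) => //; [exact: oner_neq0 | move=> ? ? ? ?; apply: mulf_neq0 | move=> i _; case: (hf i)].
move=> z /Hg [a [Ra ->]].
rewrite mulr_sumr; apply: Rsum => i.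
rewrite mulrCA; apply: RM => //.
rewrite /d (bigD1 i) //=.
case: (hf i) => R1i R2i n0i ->.
have -> : (f i).2 * (\prod_(j | j != i) (f j).2) * ((f i).1 / (f i).2) = (f i).1 * \prod_(j | j != i) (f j).2.
  by field.
by apply: RM => //; apply: Rprod => j; case: (hf j).
Qed.

Lemma conductor (c : int) : (forall n : nat, in_valR R v (c + n%:Z)) ->
  forall z, z != 0 -> c <= v z -> R z.
Proof.
move=> hc z zn0 hz.
have [d [Rd dn0 hd]] := conductor_d.
apply: (@descent R (fun z => z = 0 \/ c <= v z) (v d)) (or_intror hz).
- move=> a b; exact: highD.
- move=> r a; exact: highM.
- exact: R0.
- exact: RD.
- exact: RM.
- move=> w wn0 hw.
  have -> : w = d * (w / d) by field.
  apply: hd; right; rewrite vM ?invr_eq0 // vV //; lia.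
- move=> w [->|hw]; first by rewrite eqxx.
  move=> wn0 _.
  have [a [Ra an0 va]] := hc `|v w - c|%N.
  exists a; split => //; last by rewrite va; lia.
  by right; rewrite va; lia.
Qed.

Lemma vX z (n : nat) : z != 0 -> v (z ^+ n) = n%:Z * v z.
Proof.
move=> zn0; elim: n => [|n IH]; first by rewrite expr0 v1 // mul0r.
rewrite exprS vM ?expf_neq0 // IH; lia.
Qed.

Lemma max_pos (c : int) : (forall z, z != 0 -> c <= v z -> R z) ->
  forall a, max_ideal R a -> a != 0 -> 0 < v a.
Proof.
move=> hcond a [Ra nu] an0.
have va0 := R_val Ra an0.
rewrite lt_def va0 andbT; apply/negP => /eqP va.
pose b := a^-1.
have bn0 : b != 0 by rewrite invr_eq0.
have hb : val_ring v b by rewrite /val_ring; right; rewrite /b vV // va oppr0.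
have [r0 [Rr0 hor]] := hrr hb.
have [e0|dn0] := eqVneq (b - r0) 0.
  apply: nu; exists r0; split => //.
  have -> : r0 = b by apply/esym/eqP; rewrite -subr_eq0 e0.
  by rewrite /b mulfV.
have pd : 0 < v (b - r0) by case: hor => // h; rewrite h eqxx in dn0.
pose q := 1 - a * r0.
have eq_q : q = a * (b - r0) by rewrite /q /b; field.
have qn0 : q != 0 by rewrite eq_q mulf_neq0.
have vq : 0 < v q by rewrite eq_q vM // va add0r.
have Rq : R q by apply: RB; [exact: R1 | exact: RM].
have geo : forall N : nat, exists s, R s /\ (1 - q) * s = 1 - q ^+ N.
  elim=> [|N [s [Rs hs]]]; first by exists 0; split; [exact: R0 | rewrite mulr0 expr0 subrr].
  exists (s + q ^+ N); split; first by apply: RD => //; elim: N {s Rs hs} => [|N IH]; [rewrite expr0; exact: R1| rewrite exprS; exact: RM].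
  by rewrite mulrDr hs exprS; ring.
pose N := `|c|.+1.
have [s [Rs hs]] := geo N.
pose qN := q ^+ N.
have qNn0 : qN != 0 by rewrite expf_neq0.
have vqN : v qN = N%:Z * v q by rewrite vX.
have vqNp : c < v qN by rewrite vqN; rewrite /N; nia.
have m1 : (-qN) != 0 by rewrite oppr_eq0.
have vlt : v 1 < v (- qN) by rewrite vN // v1 //; lia.
have [v1q n1q] := vD_lt hv (oner_neq0 K) m1 vlt.
pose w0 := qN / (1 - qN).
have Rw0 : R w0.
  apply: hcond; first by rewrite mulf_neq0 // invr_eq0.
  rewrite vM // ?invr_eq0 // vV // v1q v1 //; lia.
apply: nu; exists (r0 * s * (1 + w0)); split.
  by apply: RM; [exact: RM | apply: RD; [exact: R1|]].
have -> : a * (r0 * s * (1 + w0)) = ((1 - q) * s) * (1 + w0) by rewrite /q; ring.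
rewrite hs /w0 /qN; move: n1q; rewrite /qN => n1q; field; done.
Qed.

Definition cnt (M : K -> Prop) (n : nat) := count (fun s : nat => pb (in_valM M s%:Z)) (iota 0 n).

Lemma cnt_eqK M N n : eqK M N -> cnt M n = cnt N n.
Proof.
move=> h; apply: eq_count => s; apply: pb_iff.
by split; case=> a [ha an va]; exists a; split => //; apply/h.
Qed.

Lemma in_val_sub M N z : subsetK M N -> in_valM M z -> in_valM N z.
Proof. by move=> h [a [ha an va]]; exists a; split => //; apply: h. Qed.

Lemma no_two_new (A B : K -> Prop) (a b : int) :
  is_submodule R A -> is_submodule R B -> subsetK A B ->
  (forall L, is_submodule R L -> subsetK A L -> subsetK L B -> eqK L A \/ eqK L B) ->
  a < b -> in_valM B a -> in_valM B b -> ~ in_valM A a -> ~ in_valM A b -> False.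
Proof.
move=> [A0 AD AM] [B0 BD BM] AB hmax ab [za [Bza zan vza]] [zb [Bzb zbn vzb]] na nb.
pose L := fun z => exists n w, [/\ A n, B w, (w = 0 \/ b <= v w) & z = n + w].
have subL : is_submodule R L.
  split.
  - by exists 0, 0; split => //; [left | rewrite addr0].
  - move=> z1 z2 [n1 [w1 [An1 Bw1 h1 ->]]] [n2 [w2 [An2 Bw2 h2 ->]]].
    exists (n1 + n2), (w1 + w2); split; [exact: AD | exact: BD | exact: highD | ring].
  - move=> r z Rr [n1 [w1 [An1 Bw1 h1 ->]]].
    exists (r * n1), (r * w1); split; [exact: AM | exact: BM | exact: highM | ring].
have AL : subsetK A L by move=> z Az; exists z, 0; split => //; [left | rewrite addr0].
have LB : subsetK L B by move=> z [n [w [An Bw _ ->]]]; apply: BD => //; apply: AB.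
case: (hmax L subL AL LB) => hL.
  apply: nb; exists zb; split => //; apply/hL.
  by exists 0, zb; split => //; [right; rewrite vzb | rewrite add0r].
have : L za by apply/hL.
case=> n [w [An Bw hw ez]].
case: (eqVneq w 0) => [w0|wn0].
  by apply: na; exists za; split => //; rewrite ez w0 addr0.
have vw : b <= v w by case: hw => // h; rewrite h eqxx in wn0.
case: (eqVneq n 0) => [n0|nn0].
  by move: vza; rewrite ez n0 add0r; lia.
apply: na; exists n; split => //.
have mw : - w != 0 by rewrite oppr_eq0.
have hlt : v za < v (- w) by rewrite vN // vza; lia.
have [h1 _] := vD_lt hv zan mw hlt.
by rewrite -vza -h1 ez addrK.
Qed.

Lemma step_le (A B : K -> Prop) n :
  is_submodule R A -> is_submodule R B -> subsetK A B ->
  (forall L, is_submodule R L -> subsetK A L -> subsetK L B -> eqK L A \/ eqK L B) ->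
  (cnt B n <= cnt A n + 1)%N.
Proof.
move=> sA sB AB hmax.
rewrite /cnt (count_split _ (a := fun s : nat => pb (in_valM A s%:Z))); last first.
  by move=> s /pbP h; apply/pbP; apply: in_val_sub h.
rewrite leq_add2l leqNgt; apply/negP => h.
have [x [y [xy /andP [/pbP Bx nAx] /andP [/pbP By nAy] _ _]]] := count_two (iota_uniq 0 n) h.
have xy' : x%:Z < y%:Z by rewrite ltz_nat.
apply: (no_two_new sA sB AB hmax xy' Bx By).
  by move=> h'; move/negP: nAx; apply; apply/pbP.
by move=> h'; move/negP: nAy; apply; apply/pbP.
Qed.

Lemma step_ge (A B : K -> Prop) (c : int) :
  is_submodule R A -> is_submodule R B -> subsetK A B -> ~ subsetK B A ->
  (forall z, z != 0 -> c <= v z -> A z) ->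
  (forall z, B z -> z != 0 -> 0 <= v z) ->
  (cnt A `|c| + 1 <= cnt B `|c|)%N.
Proof.
move=> [A0 AD AM] [B0 BD BM] AB nBA hi Bpos.
rewrite /cnt (count_split (b := fun s : nat => pb (in_valM B s%:Z)) _ (a := fun s : nat => pb (in_valM A s%:Z))); last first.
  by move=> s /pbP h; apply/pbP; apply: in_val_sub h.
rewrite leq_add2l -has_count.
case: (boolP (has _ _)) => // /hasPn hn; exfalso; apply: nBA.
move=> w Bw; apply: (@descent A B c) => //.
move=> z Bz zn0 vz.
have vz0 := Bpos z Bz zn0.
have hs : `|v z|%N \in iota 0 `|c| by rewrite mem_iota add0n; lia.
have := hn _ hs.
have -> : pb (in_valM B `|v z|%N%:Z) = true by apply/pbP; exists z; split => //; lia.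
rewrite /= negbK => /pbP [n [An nn0 vn]].
by exists n; split => //; [apply: AB | lia].
Qed.

Lemma chain_sub (ch : nat -> K -> Prop) n : (forall i, (i < n)%N -> subsetK (ch i) (ch i.+1)) ->
  forall i j, (i <= j)%N -> (j <= n)%N -> subsetK (ch i) (ch j).
Proof.
move=> h i j ij jn; elim: j ij jn => [|j IH] ij jn.
  by have -> : i = 0%N by lia.
case: (ltngtP i j.+1) => hij; last by rewrite hij.
  move=> z /(IH _ _) hz; apply: (h j) => //; apply: hz; lia.
lia.
Qed.

Lemma chain_le (M N : K -> Prop) n m : length_is R M N n -> (cnt M m <= cnt N m + n)%N.
Proof.
case=> ch [h0 hn hsub hss hmax].
rewrite -(cnt_eqK m hn) -(cnt_eqK m h0).
suff H : forall j, (j <= n)%N -> (cnt (ch j) m <= cnt (ch 0%N) m + j)%N by exact: H.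
elim=> [|j IH] hj; first by rewrite addn0.
have st : (cnt (ch j.+1) m <= cnt (ch j) m + 1)%N.
  apply: step_le.
  - apply: hsub; lia.
  - apply: hsub; lia.
  - by case: (hss j hj).
  - by move=> L sL h1 h2; apply: hmax.
apply: leq_trans st _.
have := IH (ltnW hj); lia.
Qed.

Lemma chain_ge (M N : K -> Prop) n (c : int) : length_is R M N n ->
  (forall z, z != 0 -> c <= v z -> N z) -> (forall z, M z -> z != 0 -> 0 <= v z) ->
  (cnt N `|c| + n <= cnt M `|c|)%N.
Proof.
case=> ch [h0 hn hsub hss hmax] hi hpos.
rewrite -(cnt_eqK _ hn) -(cnt_eqK _ h0).
have hs : forall i, (i < n)%N -> subsetK (ch i) (ch i.+1) by move=> i hi'; case: (hss i hi').
suff H : forall j, (j <= n)%N -> (cnt (ch 0%N) `|c| + j <= cnt (ch j) `|c|)%N by exact: H.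
elim=> [|j IH] hj; first by rewrite addn0.
have st : (cnt (ch j) `|c| + 1 <= cnt (ch j.+1) `|c|)%N.
  apply: step_ge.
  - apply: hsub; lia.
  - apply: hsub; lia.
  - exact: hs.
  - by case: (hss j hj).
  - move=> z zn0 hz; have hz0 : ch 0%N z by apply/(h0 z); apply: hi.
    by apply: (chain_sub hs (i := 0%N) (j := j)) hz0 => //; lia.
  - move=> z hz zn0; apply: hpos zn0; apply/(hn z).
    by apply: (chain_sub hs (i := j.+1) (j := n)) hz.
apply: leq_trans st.
have := IH (ltnW hj); lia.
Qed.

Lemma nonunit f : R f -> f != 0 -> 0 < v f -> max_ideal R f.
Proof.
move=> Rf fn0 vf; split => // [[b [Rb fb]]].
have bn0 : b != 0 by apply/negP => /eqP b0; move: fb; rewrite b0 mulr0 => /eqP; rewrite eq_sym oner_eq0.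
have := vM hv fn0 bn0; rewrite fb v1 //.
have := R_val Rb bn0; lia.
Qed.

Lemma colon_R a : R a -> colon R (max_ideal R) a.
Proof. by move=> Ra b [Rb _]; apply: RM. Qed.

Lemma colon_t (c e : int) t (s : nat) : (forall z, z != 0 -> c <= v z -> R z) ->
  (forall a, max_ideal R a -> a != 0 -> e <= v a) -> t != 0 -> v t = 1 ->
  c <= s%:Z + e -> colon R (max_ideal R) (t ^+ s).
Proof.
move=> hcond mge tn0 vt hs a ma.
case: (eqVneq a 0) => [->|an0]; first by rewrite mulr0; exact: R0.
apply: hcond; first by rewrite mulf_neq0 // expf_neq0.
rewrite vM ?expf_neq0 // vX // vt mulr1; have := mge a ma an0; lia.
Qed.

Hypothesis hloc : is_local R.

Lemma colon_f (c e : int) (x f f1 f2 : K) : (forall z, z != 0 -> c <= v z -> R z) ->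
  max_ideal R x -> x != 0 -> v x = e ->
  (forall a, max_ideal R a -> a != 0 -> v a < c ->
     in_valR R v (v a - e) \/ v a = v f1 \/ v a = v f2) ->
  R f1 -> f1 != 0 -> 0 < v f1 -> R f2 -> f2 != 0 -> 0 < v f2 ->
  R f -> f != 0 -> e <= v f -> c <= v f + v f1 - e -> c <= v f + v f2 - e ->
  colon R (max_ideal R) (f / x).
Proof.
move=> hcond mx xn0 vx hm Rf1 f1n vf1 Rf2 f2n vf2 Rf fn vf c1 c2 a ma.
have fxn : f / x != 0 by rewrite mulf_neq0 // invr_eq0.
have vfx : v (f / x) = v f - e by rewrite vM // ?invr_eq0 // vV // vx.
case: hloc => locD locM.
apply: (@descent (fun a => R (f / x * a)) (max_ideal R) c) ma.
- exact: locD.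
- exact: locM.
- by rewrite mulr0; exact: R0.
- by move=> a1 a2 h1 h2; rewrite mulrDr; apply: RD.
- by move=> r a1 Rr h; rewrite mulrCA; apply: RM.
- move=> z zn0 hz; apply: hcond; first by rewrite mulf_neq0.
  rewrite vM // vfx; lia.
- move=> z mz zn0 vz.
  case: (hm z mz zn0 vz) => [[s [Rs sn0 vs]]|[ez|ez]].
  + exists (s * x); split.
    * have -> : f / x * (s * x) = f * s by field.
      exact: RM.
    * by apply: locM.
    * by rewrite mulf_neq0.
    * by rewrite vM // vs vx; lia.
  + exists f1; split => //; last by apply: nonunit.
    apply: hcond; first by rewrite mulf_neq0.
    by rewrite vM // vfx; lia.
  + exists f2; split => //; last by apply: nonunit.
    apply: hcond; first by rewrite mulf_neq0.
    by rewrite vM // vfx; lia.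
Qed.
End Ring.


Lemma aux1 (P L1 L2 E C Y1 Y2 : nat) : (C <= Y1 + L1 * E + E)%N -> (C <= Y2 + L2 * E + E)%N -> (Y1 < Y2)%N ->
  P = (L1 + L2 + 2)%N -> C = (P * E + E)%N -> (C <= Y2 + Y1 - E)%N /\ (C <= Y2 + Y2 - E)%N.
Proof. move=> h1 h2 h3 hp hc; subst; nia. Qed.
Lemma aux2 (P L1 E C Y1 Y2 : nat) : (C <= Y1 + L1 * E + E)%N -> (Y1 < Y2)%N -> (C <= P * E + E)%N -> (P * E < C)%N ->
  ((2 * L1 + 3 <= P)%N \/ (P = 2 * L1 + 2 /\ C = P * E + E)%N) ->
  [/\ (C <= Y1 + Y1 - E)%N, (C <= Y1 + Y2 - E)%N, (C <= Y2 + Y1 - E)%N & (C <= Y2 + Y2 - E)%N].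
Proof.
move=> h1 h2 h3 h4 [h|[hp hc]].
  have : ((2 * L1 + 3) * E <= P * E)%N by rewrite leq_mul2r h orbT.
  move=> h5; split; nia.
subst; split; nia.
Qed.

Unset Implicit Arguments.
Theorem lemma2p4 (K : fieldType) (R : K -> Prop) (v : K -> int)
    (x : K) (c e p y1 y2 l1 l2 : int) (delta r k : nat)
  (* standing assumptions on R *)
  (hR : is_subring R) (hK : is_quotient_field R)
  (hv : is_normalized_discrete_valuation v)
  (hRbar : integral_closure_is R (val_ring v))
  (hfin : finite_Rmodule R (val_ring v))
  (hloc : is_local R)
  (hnreg : ~ regular_dim1 R)
  (hrr : residually_rational R v)
  (* c : least element of v(R) with c + N contained in v(R) *)
  (hc : in_valR R v c /\ (forall n : nat, in_valR R v (c + n%:Z)) /\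
        (forall c', in_valR R v c' -> (forall n : nat, in_valR R v (c' + n%:Z)) -> c <= c'))
  (* e : least positive element of v(R) *)
  (he : 0 < e /\ in_valR R v e /\ (forall e', 0 < e' -> in_valR R v e' -> e <= e'))
  (* delta, r *)
  (hdelta : length_is R (val_ring v) R delta)
  (hr : length_is R (colon R (max_ideal R)) R r)
  (* x in m with v(x) = e, and k *)
  (hx : max_ideal R x /\ x != 0 /\ v x = e)
  (hk : length_is R R (sum_C_xR R (colon R (val_ring v)) x) k)
  (* p *)
  (hp : c - e <= p * e /\ p * e < c)
  (* y1 < y2 *)
  (hy : y1 < y2 /\ forall y, (in_valR R v y /\ 0 < y /\ y < c /\ ~ in_valR R v (y - e))
                              <-> (y = y1 \/ y = y2))
  (* l1, l2 *)
  (hl1 : 0 <= l1 /\ y1 + l1 * e < c /\ c <= y1 + (l1 + 1) * e)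
  (hl2 : 0 <= l2 /\ y2 + l2 * e < c /\ c <= y2 + (l2 + 1) * e)
  (* the assumption k = 3 *)
  (hk3 : k = 3%N) :
  let h := (p + 1) * e - c in
  let b := (c - delta%:Z) * r%:Z - delta%:Z in
  let L := l1 + l2 + 2 in
  [/\ (r%:Z = e - 3 ->
         [/\ b = L * (e - 2) + h - 2 * (p + 1),
             (p < L -> b >= L * (e - 4) + h /\ h >= 0)
           & (p = L -> b = L * (e - 4) + h - 2 /\ h > 0)]),
      (r%:Z = e - 2 ->
         [/\ b = L * (e - 1) + h - p - 1, p <= 2 * l1 + 2
           & (p = 2 * l1 + 2 -> h > 0)])
    & (r%:Z = e - 1 -> b = L * e + h)].
Proof.
move=> h b L.
case: hc => hc0 [hcN hcmin].
case: he => e0 [he1 hemin].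
case: hx => mx [xn0 vx].
case: hy => y12 hyiff.
case: hl1 => l10 [hl1a hl1b].
case: hl2 => l20 [hl2a hl2b].
case: hp => hp1 hp2.
have hcond := conductor hR hv hRbar hrr hK hfin hcN.
have Sval : forall n, in_valR R v n -> 0 <= n.
  by move=> n [a [Ra an va]]; rewrite -va; exact: (R_val hR hRbar Ra an).
have val0 : in_valR R v 0.
  by exists 1; split; [exact: (R1 hR) | exact: oner_neq0 | exact: (v1 hv)].
have vadd : forall m n, in_valR R v m -> in_valR R v n -> in_valR R v (m + n).
  move=> m n [a [Ra an va]] [a' [Ra' an' va']]; exists (a * a'); split.
  - exact: (RM hR).
  - by rewrite mulf_neq0.
  - by rewrite (vM hv) // va va'.
have mpos := max_pos hR hv hRbar hrr hcond.
have mge : forall a, max_ideal R a -> a != 0 -> e <= v a.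
  move=> a ma an; apply: hemin; first exact: mpos.
  by exists a; split => //; case: ma.
have [Sy1 [y1p [y1c ny1]]] := (hyiff y1).2 (or_introl erefl).
have [Sy2 [y2p [y2c ny2]]] := (hyiff y2).2 (or_intror erefl).
have ey1 : e < y1.
  rewrite lt_neqAle hemin // andbT; apply/eqP => ey; apply: ny1; by rewrite ey subrr.
have ey2 : e < y2.
  rewrite lt_neqAle hemin // andbT; apply/eqP => ey; apply: ny2; by rewrite ey subrr.
have [E eE] : exists E : nat, e = E%:Z by exists `|e|%N; lia.
have [C cE] : exists C : nat, c = C%:Z by exists `|c|%N; lia.
have [P pE] : exists P : nat, p = P%:Z by exists `|p|%N; nia.
have [Y1 y1E] : exists Y1 : nat, y1 = Y1%:Z by exists `|y1|%N; lia.
have [Y2 y2E] : exists Y2 : nat, y2 = Y2%:Z by exists `|y2|%N; lia.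
have [L1 l1E] : exists L1 : nat, l1 = L1%:Z by exists `|l1|%N; lia.
have [L2 l2E] : exists L2 : nat, l2 = L2%:Z by exists `|l2|%N; lia.
move: vx; subst e c p y1 y2 l1 l2 => vx.
pose S := fun s : nat => pb (in_valR R v s%:Z).
have S0 : S 0%N by apply/pbP.
have SE : S E by rewrite /S; apply/pbP.
have Sadd : forall a b, S a -> S b -> S (a + b)%N.
  by move=> a1 a2 /pbP ha /pbP hb; apply/pbP; rewrite PoszD; apply: vadd.
have Epos : (0 < E)%N by lia.
have SY1 : S Y1 by apply/pbP.
have SY2 : S Y2 by apply/pbP.
have Y1pos : (0 < Y1)%N by lia.
have Y12 : (Y1 < Y2)%N by lia.
have Y2c : (Y2 < C)%N by lia.
have nY1 : ~~ ((E <= Y1)%N && S (Y1 - E)%N).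
  apply/negP => /andP [h1 /pbP h2]; apply: ny1.
  have e' : ((Y1 - E)%N)%:Z = Y1%:Z - E%:Z by lia.
  by rewrite -e'.
have nY2 : ~~ ((E <= Y2)%N && S (Y2 - E)%N).
  apply/negP => /andP [h1 /pbP h2]; apply: ny2.
  have e' : ((Y2 - E)%N)%:Z = Y2%:Z - E%:Z by lia.
  by rewrite -e'.
have hy' : forall s, S s -> (0 < s)%N -> (s < C)%N -> ~~ ((E <= s)%N && S (s - E)%N) -> (s == Y1) || (s == Y2).
  move=> s /pbP Ss sp sc hn.
  have nn : ~ in_valR R v (s%:Z - E%:Z).
    move=> hin; have := Sval _ hin => hge.
    move/negP: hn; apply; apply/andP; split; first by lia.
    apply/pbP; have e' : ((s - E)%N)%:Z = s%:Z - E%:Z by lia.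
    by rewrite e'.
  have hs : in_valR R v s%:Z /\ 0 < s%:Z /\ s%:Z < C%:Z /\ ~ in_valR R v (s%:Z - E%:Z).
    by split; [exact: Ss | split; [lia | split; [lia | exact: nn]]].
  by case: ((hyiff s%:Z).1 hs) => e'; apply/orP; [left|right]; apply/eqP; lia.
have hP1 : (P * E < C)%N by lia.
have hP2 : (C <= P * E + E)%N by lia.
have hL1a : (Y1 + L1 * E < C)%N by lia.
have hL1b : (C <= Y1 + L1 * E + E)%N by lia.
have hL2a : (Y2 + L2 * E < C)%N by lia.
have hL2b : (C <= Y2 + L2 * E + E)%N by lia.
have EC : (E <= C)%N by lia.
have eY1n : (E < Y1)%N by clear -ey1; lia.
have eY2n : (E < Y2)%N by clear -ey2; lia.
clear e0 y12 l10 hl1a hl1b l20 hl2a hl2b hp1 hp2 ey1 ey2 y1p y1c y2p y2c.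
have cS := count_S S0 SE Sadd Epos SY1 SY2 Y1pos Y12 Y2c nY1 nY2 hy' hP1 hP2 hL1a hL1b hL2a hL2b.
have cge := count_Sge S0 SE Sadd Epos SY1 SY2 Y1pos Y12 Y2c nY1 nY2 hy' hP1 hP2 hL1a hL1b hL2a hL2b EC.
case: (hv) => _ _ [t [tn0 vt]].
have hd1 := chain_le hR hv hRbar C hdelta.
have hposbar : forall z, val_ring v z -> z != 0 -> 0 <= v z.
  by move=> z [->|//]; rewrite eqxx.
have hd2 := chain_ge hR hv hrr hdelta hcond hposbar.
have cbar : cnt v (val_ring v) C = C.
  rewrite /cnt (eq_in_count (a2 := predT)) ?count_predT ?size_iota // => s _.
  apply/pbP; exists (t ^+ s); split.
  - by right; rewrite (vX hv) // vt; lia.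
  - by rewrite expf_neq0.
  - by rewrite (vX hv) // vt; lia.
have cR : cnt v R C = (P.+1 + L1.+1 + L2.+1)%N by exact: cS.
have hdelta' : (C = P.+1 + L1.+1 + L2.+1 + delta)%N.
  move: hd1 hd2; rewrite cbar cR /=; lia.
have hc1 := chain_le hR hv hRbar C hr.
rewrite cR in hc1.
have colge : forall (X : pred nat), (forall s, X s -> in_valM v (colon R (max_ideal R)) s%:Z) ->
    (count (fun s => S s || (C - E <= s)%N || X s) (iota 0 C) <= cnt v (colon R (max_ideal R)) C)%N.
  move=> X hX; apply: sub_count => s /orP [/orP [/pbP [a [Ra an va]]|hs]|hs]; apply/pbP.
  - by exists a; split => //; apply: (colon_R hR).
  - exists (t ^+ s); split.
    + apply: (colon_t hR hv hcond mge tn0 vt); lia.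
    + by rewrite expf_neq0.
    + by rewrite (vX hv) // vt; lia.
  - exact: hX.
have [f1 [Rf1 f1n vf1]] := Sy1.
have [f2 [Rf2 f2n vf2]] := Sy2.
have hm : forall a, max_ideal R a -> a != 0 -> v a < C%:Z ->
     in_valR R v (v a - E%:Z) \/ v a = v f1 \/ v a = v f2.
  move=> a ma an va.
  case: (classic (in_valR R v (v a - E%:Z))) => [h'|h']; [by left | right].
  have hs : in_valR R v (v a) /\ 0 < v a /\ v a < C%:Z /\ ~ in_valR R v (v a - E%:Z).
    split; first by exists a; split => //; case: ma.
    by split; [exact: mpos | split].
  by case: ((hyiff (v a)).1 hs) => ->; [left|right]; rewrite ?vf1 ?vf2.
have f1p : 0 < v f1 by rewrite vf1 ltz_nat.
have f2p : 0 < v f2 by rewrite vf2 ltz_nat (ltn_trans Y1pos Y12).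
have colf := colon_f hR hv hRbar hrr hloc hcond mx xn0 vx hm Rf1 f1n f1p Rf2 f2n f2p.
have cond1 : (C <= Y1 + Y1 - E)%N -> (C <= Y1 + Y2 - E)%N -> in_valM v (colon R (max_ideal R)) ((Y1 - E)%N)%:Z.
  move=> c1 c2; exists (f1 / x); split.
  - apply: colf => //; rewrite ?vf1 ?vf2; clear -c1 c2 eY1n eY2n Y12; lia.
  - by rewrite mulf_neq0 // invr_eq0.
  - by rewrite (vM hv) ?invr_eq0 // (vV hv) // vf1 vx; clear -eY1n; lia.
have cond2 : (C <= Y2 + Y1 - E)%N -> (C <= Y2 + Y2 - E)%N -> in_valM v (colon R (max_ideal R)) ((Y2 - E)%N)%:Z.
  move=> c1 c2; exists (f2 / x); split.
  - apply: colf => //; rewrite ?vf1 ?vf2; clear -c1 c2 eY1n eY2n Y12; lia.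
  - by rewrite mulf_neq0 // invr_eq0.
  - by rewrite (vM hv) ?invr_eq0 // (vV hv) // vf2 vx; clear -eY2n; lia.
have nS1 : ~~ S (Y1 - E)%N by apply/negP => h1; move/negP: nY1; apply; rewrite h1 andbT; clear -eY1n; lia.
have nS2 : ~~ S (Y2 - E)%N by apply/negP => h1; move/negP: nY2; apply; rewrite h1 andbT; clear -eY2n; lia.
have cor : forall (a bb : pred nat) x, (forall y, bb y = a y || (y == x)) -> x \in iota 0 C -> ~~ a x ->
    count bb (iota 0 C) = (count a (iota 0 C) + 1)%N.
  move=> a bb z hb zs naz; rewrite (eq_count hb); exact: count_or1 (iota_uniq 0 C) zs naz.
have x1i : (Y1 - E)%N \in iota 0 C by rewrite mem_iota; clear -Y12 Y2c; lia.
have x2i : (Y2 - E)%N \in iota 0 C by rewrite mem_iota; clear -Y2c; lia.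
have na2 : ~~ (S (Y2 - E)%N || (C - E <= (Y2 - E)%N)%N).
  by apply/negP => /orP [h1|h1]; [move/negP: nS2 | clear -h1 Y2c eY2n; lia].
have na1 : ~~ (S (Y1 - E)%N || (C - E <= (Y1 - E)%N)%N).
  by apply/negP => /orP [h1|h1]; [move/negP: nS1 | clear -h1 Y12 Y2c eY1n; lia].
have na12 : ~~ (S (Y2 - E)%N || (C - E <= (Y2 - E)%N)%N || ((Y2 - E)%N == (Y1 - E)%N)).
  apply/negP => /orP [h1|/eqP h1]; first by move/negP: na2.
  clear -h1 Y12 eY1n eY2n; lia.
have one2 : (C <= Y2 + Y1 - E)%N -> (C <= Y2 + Y2 - E)%N -> (P.+1 + L1.+1 + L2.+1 + E - 3 + 1 <= P.+1 + L1.+1 + L2.+1 + r)%N.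
  move=> c1 c2; apply: leq_trans hc1.
  apply: leq_trans (colge (fun s => s == (Y2 - E)%N) _); last by move=> s /eqP ->; apply: cond2.
  rewrite (cor (fun s => S s || (C - E <= s)%N) _ ((Y2 - E)%N) (fun y => erefl) x2i na2) cge.
  by [].
have two12 : (C <= Y1 + Y1 - E)%N -> (C <= Y1 + Y2 - E)%N -> (C <= Y2 + Y1 - E)%N -> (C <= Y2 + Y2 - E)%N ->
    (P.+1 + L1.+1 + L2.+1 + E - 3 + 2 <= P.+1 + L1.+1 + L2.+1 + r)%N.
  move=> c1 c2 c3 c4; apply: leq_trans hc1.
  apply: leq_trans (colge (fun s => (s == (Y1 - E)%N) || (s == (Y2 - E)%N)) _); last first.
    by move=> s /orP [] /eqP ->; [apply: cond1 | apply: cond2].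
  rewrite (eq_count (a2 := fun s => (S s || (C - E <= s)%N || (s == (Y1 - E)%N)) || (s == (Y2 - E)%N))); last first.
    by move=> s; rewrite orbA.
  rewrite (cor (fun s => S s || (C - E <= s)%N || (s == (Y1 - E)%N)) _ ((Y2 - E)%N) (fun y => erefl) x2i na12).
  rewrite (cor (fun s => S s || (C - E <= s)%N) _ ((Y1 - E)%N) (fun y => erefl) x1i na1) cge.
  set TT := (P.+1 + L1.+1 + L2.+1 + E - 3)%N; by rewrite -addnA.
have hdc : C%:Z - delta%:Z = P%:Z + 1 + (L1%:Z + L2%:Z + 2) by clear -hdelta'; lia.
have hdl : delta%:Z = C%:Z - (P%:Z + 1 + (L1%:Z + L2%:Z + 2)) by clear -hdelta'; lia.
rewrite /b /h /L.
split.
- move=> hr3; split.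
  + by rewrite hdc hr3 hdl; ring.
  + move=> hpl; split; last by clear -hP2; lia.
    rewrite hdc hr3 hdl.
    have e3 : (P%:Z + 1 + (L1%:Z + L2%:Z + 2)) * (E%:Z - 3) - (C%:Z - (P%:Z + 1 + (L1%:Z + L2%:Z + 2))) -
      ((L1%:Z + L2%:Z + 2) * (E%:Z - 4) + ((P%:Z + 1) * E%:Z - C%:Z)) = 2 * (L1%:Z + L2%:Z + 2) - 2 * (P%:Z + 1) by ring.
    rewrite -subr_ge0 e3; clear -hpl; lia.
  + move=> hpl; split.
    * rewrite hdc hr3 hdl -hpl; ring.
    * rewrite ltNge; apply/negP => hh.
      have hP' : P = (L1 + L2 + 2)%N by clear -hpl; lia.
      have hC' : C = (P * E + E)%N by clear -hh hP2; lia.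
      have [c3 c4] := @aux1 P L1 L2 E C Y1 Y2 hL1b hL2b Y12 hP' hC'.
      have := one2 c3 c4; clear -hr3; lia.
- move=> hr2; split.
  + by rewrite hdc hr2 hdl; ring.
  + rewrite leNgt; apply/negP => hh.
    have hor : ((2 * L1 + 3 <= P)%N \/ (P = 2 * L1 + 2 /\ C = P * E + E)%N) by left; clear -hh; lia.
    have [c1 c2 c3 c4] := @aux2 P L1 E C Y1 Y2 hL1b Y12 hP2 hP1 hor.
    have := two12 c1 c2 c3 c4; clear -hr2; lia.
  + move=> hpl; rewrite ltNge; apply/negP => hh.
    have hor : ((2 * L1 + 3 <= P)%N \/ (P = 2 * L1 + 2 /\ C = P * E + E)%N) by right; clear -hh hpl hP2; lia.
    have [c1 c2 c3 c4] := @aux2 P L1 E C Y1 Y2 hL1b Y12 hP2 hP1 hor.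
    have := two12 c1 c2 c3 c4; clear -hr2; lia.
- move=> hr1.
  by rewrite hdc hr1 hdl; ring.
Qed.
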